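(* Let $A[0],\dots,A[m-1]$ and $B[0],\dots,B[n-1]$ be arrays of elements whose keys are totally preordered by $\leq$, each array sorted so that $A[j-1]\leq A[j]$ for $1\leq j<m$ and $B[k-1]\leq B[k]$ for $1\leq k<n$. Let $C=\mathsf{stable\_merge}(A,B,\leq)$. Then for every $i$ with $0\leq i<m+n$ there exist a unique $j$ with $0\leq j\leq m$ and a unique $k$ with $0\leq k\leq n$ such that $j+k=i$ and (1) $j=0$ or $A[j-1]\leq B[k]$, and (2) $k=0$ or $B[k-1]<A[j]$. Moreover these $j,k$ satisfy $\mathsf{stable\_merge}(A[0,\ldots,j-1],B[0,\ldots,k-1],\leq)=C[0,\ldots,i-1]$.
   Context: Arrays are indexed from $0$. By convention $A[-1]=B[-1]=-\infty$ and $A[m]=B[n]=+\infty$ (sentinels, not stored), so that expressions such as $A[m]$ or $B[n]$ in the conditions are meaningful. $\mathsf{stable\_merge}(X,Y,\leq)$ denotes the sorted (with respect to $\leq$ on keys) sequence consisting of all elements of $X$ and $Y$ in which the relative order of elements is stable: elements of $X$ keep their relative order, elements of $Y$ keep their relative order, and whenever an element of $X$ and an element of $Y$ have equal keys, the element of $X$ comes first. For an output position $i$, the indices $j,k$ are called the co-ranks of the rank $i$. *)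

(* Defs.v *)
From mathcomp Require Import all_boot.
Set Implicit Arguments. Unset Strict Implicit. Unset Printing Implicit Defensive.

(* stable_merge X Y le: the standard stable merge; on ties (x <= y) the
   element of X comes first.  This is MathComp's [path.merge]. *)
Definition stable_merge (T : Type) (le : rel T) (X Y : seq T) : seq T :=
  path.merge le X Y.

(* Condition (1):  j = 0  or  A[j-1] <= B[k], with the sentinel B[n] = +oo. *)
Definition corank_cond1 (T : Type) (le : rel T) (A B : seq T) (j k : nat) : Prop :=
  j = 0 \/
  (forall a b, onth A j.-1 = Some a -> onth B k = Some b -> le a b).

(* Condition (2):  k = 0  or  B[k-1] < A[j], with the sentinel A[m] = +oo;
   in a total preorder, B[k-1] < A[j] means ~ (A[j] <= B[k-1]). *)
Definition corank_cond2 (T : Type) (le : rel T) (A B : seq T) (j k : nat) : Prop :=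
  k = 0 \/
  (forall b a, onth B k.-1 = Some b -> onth A j = Some a -> ~~ le a b).

(* Main.v *)
Require Import Defs.
From mathcomp Require Import all_boot zify.

Lemma merge_s0 (T : Type) (le : rel T) (s : seq T) : path.merge le s [::] = s.
Proof. by case: s. Qed.

Lemma merge_cc (T : Type) (le : rel T) a s b t :
  path.merge le (a :: s) (b :: t) =
  if le a b then a :: path.merge le s (b :: t) else b :: path.merge le (a :: s) t.
Proof. by []. Qed.

Lemma merge_0s (T : Type) (le : rel T) s : path.merge le [::] s = s.
Proof. by []. Qed.

Lemma path_onth (T : Type) (le : rel T) (le_trans : transitive le) x s n y :
  path le x s -> onth s n = Some y -> le x y.
Proof.
elim: s x n => [|z s IH] x [|n] //=.
- by case/andP=> H _ [<-].
- case/andP=> H1 H2 /(IH _ _ H2) H3. exact: (le_trans _ _ _ H1 H3).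
Qed.

Lemma sorted_onth (T : Type) (le : rel T) (le_total : total le)
  (le_trans : transitive le) s i j x y :
  sorted le s -> i <= j -> onth s i = Some x -> onth s j = Some y -> le x y.
Proof.
elim: s x y i j => [|z s IH] x y [|i] [|j] //=.
- move=> ps _ [<-] [<-]. by case/orP: (le_total z z).
- move=> ps _ [<-] Hy. exact: path_onth ps Hy.
- move=> ps Hij Hx Hy. exact: (IH x y i j (path_sorted ps) Hij Hx Hy).
Qed.

Lemma onth_ex (T : Type) (s : seq T) n : n < size s -> exists x, onth s n = Some x.
Proof.
elim: s n => [|z s IH] [|n] //=; first by eauto.
by move=> /IH.
Qed.

Lemma exist_part (T : Type) (le : rel T)
  (le_total : total le) (le_trans : transitive le) i : forall (A B : seq T),
  sorted le A -> sorted le B ->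
  i < size A + size B ->
  exists j k,
    j <= size A /\ k <= size B /\ j + k = i /\
        corank_cond1 le A B j k /\ corank_cond2 le A B j k /\
        stable_merge le (take j A) (take k B) = take i (stable_merge le A B).
Proof.
rewrite /stable_merge.
elim: i => [|i IH] A B sA sB Hi.
  exists 0, 0; do 5 (split; first by rewrite /corank_cond1 /corank_cond2; auto).
  by rewrite !take0.
case: A sA Hi => [|a A'] sA Hi.
  exists 0, i.+1; split => //; split; first by rewrite add0n in Hi; exact: ltnW.
  split => //; split; first by left.
  split; first by right => b a' _; rewrite onth0n.
  by [].
case: B sB Hi => [|b B'] sB Hi.
  exists i.+1, 0; split; first by rewrite addn0 in Hi; exact: ltnW.
  split => //; split; first by rewrite addn0.
  split; first by right => a' b' _; rewrite onth0n.
  split; first by left.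
  by rewrite take0 merge_s0 merge_s0.
case Hab: (le a b).
- have Hi' : i < size A' + size (b :: B') by move: Hi; rewrite /= addSn.
  have [j [k [Hj [Hk [Hjk [C1 [C2 HM]]]]]]] := IH A' (b :: B') (path_sorted sA) sB Hi'.
  exists j.+1, k; split => //; split => //; split; first by rewrite addSn Hjk.
  split.
    right => x y /= Hx Hy.
    case: j Hx {Hj Hjk C2 HM} C1 => [|j] /= Hx C1.
      move: Hx => [<-].
      case: k Hy {Hk C1} => [|k] /=; first by move=> [<-].
      move=> Hy; exact: (le_trans _ _ _ Hab (@path_onth _ _ le_trans b B' k _ sB Hy)).
    case: C1 => // C1; exact: (C1 _ _ Hx Hy).
  split.
    case: C2 => [->|C2]; [by left | right] => y x Hy /= Hx; exact: C2 Hy Hx.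
  rewrite merge_cc Hab /= -HM; case: k {Hk Hjk C1 C2 HM} => [|k] /=.
    by rewrite !merge_s0.
  by rewrite Hab.
- have Hi' : i < size (a :: A') + size B' by move: Hi; rewrite /= addnS.
  have [j [k [Hj [Hk [Hjk [C1 [C2 HM]]]]]]] := IH (a :: A') B' sA (path_sorted sB) Hi'.
  exists j, k.+1; split => //; split => //; split; first by rewrite addnS Hjk.
  split.
    case: C1 => [->|C1]; [by left | right] => x y Hx /= Hy; exact: C1 Hx Hy.
  split.
    right => y x /= Hy Hx; apply/negP => Hxy.
    case: k Hy {Hk Hjk C1 HM} C2 => [|k] /= Hy C2.
      move: Hy => [<-] in Hxy.
      have Hax : le a x.
        case: j Hx {Hj} C2 => [|j] /= Hx; first by move: Hx => [<-]; case/orP: (le_total a a).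
        move=> _; exact: (@path_onth _ _ le_trans a A' j _ sA Hx).
      by rewrite (le_trans _ _ _ Hax Hxy) in Hab.
    case: C2 => // C2; by move: (C2 _ _ Hy Hx); rewrite Hxy.
  rewrite merge_cc Hab /= -HM; case: j {Hj Hjk C1 C2 HM} => [|j] /=.
    by [].
  by rewrite Hab.
Qed.

Lemma uniq_half (T : Type) (le : rel T)
  (le_total : total le) (le_trans : transitive le)
  (A B : seq T) (sA : sorted le A) (sB : sorted le B) j k j' k' :
  j < j' -> j' <= size A -> k <= size B -> j + k = j' + k' ->
  corank_cond2 le A B j k -> corank_cond1 le A B j' k' -> False.
Proof.
move=> Hjj Hj' Hk Heq C2 C1.
have Hkk : k' < k by lia.
case: C2 => [Hk0|C2]; first by lia.
case: C1 => [Hj0|C1]; first by lia.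
have [x Hx] : exists z, onth A j = Some z by apply: onth_ex; lia.
have [x' Hx'] : exists z, onth A j'.-1 = Some z by apply: onth_ex; lia.
have [y Hy] : exists z, onth B k.-1 = Some z by apply: onth_ex; lia.
have [y' Hy'] : exists z, onth B k' = Some z by apply: onth_ex; lia.
have H1 : le x x' by apply: (@sorted_onth T le le_total le_trans A j j'.-1 x x' sA _ Hx Hx'); lia.
have H2 : le y' y by apply: (@sorted_onth T le le_total le_trans B k' k.-1 y' y sB _ Hy' Hy); lia.
have H3 := C1 _ _ Hx' Hy'.
have := C2 _ _ Hy Hx.
rewrite (le_trans _ _ _ (le_trans _ _ _ H1 H3) H2) //.
Qed.

Theorem lemma1 (T : Type) (le : rel T)
  (le_total : total le) (le_trans : transitive le)
  (A B : seq T) (sA : sorted le A) (sB : sorted le B) (i : nat) :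
  i < size A + size B ->
  exists j k,
    j <= size A /\ k <= size B /\ j + k = i /\
        corank_cond1 le A B j k /\ corank_cond2 le A B j k /\
        (forall j' k', j' <= size A -> k' <= size B -> j' + k' = i ->
            corank_cond1 le A B j' k' -> corank_cond2 le A B j' k' ->
            j' = j /\ k' = k) /\
        stable_merge le (take j A) (take k B) = take i (stable_merge le A B).
Proof.
move=> Hi.
have [j [k [Hj [Hk [Hjk [C1 [C2 HM]]]]]]] := @exist_part T le le_total le_trans i A B sA sB Hi.
exists j, k; do 5 (split; first by []). split => //.
move=> j' k' Hj' Hk' Hjk' C1' C2'.
case: (ltngtP j j') => H.
- exfalso; apply: (@uniq_half T le le_total le_trans A B sA sB j k j' k' H Hj' Hk _ C2 C1'); lia.
- exfalso; apply: (@uniq_half T le le_total le_trans A B sA sB j' k' j k H Hj Hk' _ C2' C1); lia.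
- split => //; lia.
Qed.
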